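(* Let $G$ be a multigraph with unit edge capacities and terminal set ${\mathcal T}$, and let $G'$ be a legal contracted graph for $G$, obtained by contracting the clusters of a collection ${\mathcal C}$. Let $S'\subseteq V(G')\setminus{\mathcal T}$ and $E'\subseteq\operatorname{out}_{G'}(S')$ be such that $S'$ is $\alpha$-well-linked for $E'$ in $G'$, for some $\alpha<1$. Let $S\subseteq V(G)\setminus{\mathcal T}$ be obtained from $S'$ by replacing every super-node $v_C\in S'$ ($C\in{\mathcal C}$) with the vertices of $C$. Then $S$ is $\alpha/3$-well-linked for $E'$ in $G$ (where edges of $G'$ are identified with the corresponding edges of $G$, so that $E'\subseteq\operatorname{out}_G(S)$).
   Context: For a set $A$ of vertices, $\operatorname{out}(A)$ is the set of edges with exactly one endpoint in $A$. A set $A$ is $\alpha$-well-linked for a set $\tilde E\subseteq\operatorname{out}(A)$ if for every partition $(X,Y)$ of $A$, with $T_X=\tilde E\cap\operatorname{out}(X)$ and $T_Y=\tilde E\cap\operatorname{out}(Y)$, $|E(X,Y)|\geq\alpha\min\{|T_X|,|T_Y|\}$; $A$ is $\alpha$-well-linked if it is $\alpha$-well-linked for $\operatorname{out}(A)$. A flow between edges of $\operatorname{out}(S)$ is contained in $S$ if every flow path has its first and last edge in $\operatorname{out}(S)$ and all other edges in $G[S]$. A set $S\subseteq V\setminus{\mathcal T}$ with $|\operatorname{out}(S)|=z$ is a good router if $S$ is $1/3$-well-linked and every pair of edges $e,e'\in\operatorname{out}(S)$ can simultaneously send $1/z$ flow units to each other by a flow contained in $S$ with congestion at most $34$. $G'$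 is a legal contracted graph for $G$ if there is a collection ${\mathcal C}$ of disjoint good routers (containing no terminals) such that $G'$ is obtained from $G$ by contracting each $C\in{\mathcal C}$ into a super-node $v_C$ (self-loops removed, parallel edges kept); each edge of $G'$ corresponds to an edge of $G$. *)

(* Defs.v *)
From HB Require Import structures.
From mathcomp Require Import all_boot all_order all_algebra.
From mathcomp Require Import reals.
Set Implicit Arguments. Unset Strict Implicit. Unset Printing Implicit Defensive.
Import Order.TTheory GRing.Theory Num.Theory.
Local Open Scope ring_scope.

(* A multigraph (unit capacities) is given by finite types of vertices V and
   edges E together with an endpoint map [ends : E -> V * V]; parallel edges
   are distinct elements of E. *)

Section Graph.
Variables (V E : finType) (ends : E -> V * V).

Definition out (A : {set V}) : {set E} :=
  [set e | ((ends e).1 \in A) != ((ends e).2 \in A)].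

Definition cut (X Y : {set V}) : {set E} :=
  [set e | (((ends e).1 \in X) && ((ends e).2 \in Y))
        || (((ends e).1 \in Y) && ((ends e).2 \in X))].

Definition well_linked_for (R : realType) (A : {set V}) (Et : {set E})
    (alpha : R) : Prop :=
  forall X Y : {set V}, X :|: Y = A -> [disjoint X & Y] ->
    alpha * Num.min (#|Et :&: out X|%:R) (#|Et :&: out Y|%:R)
      <= (#|cut X Y|%:R : R).

Definition well_linked (R : realType) (A : {set V}) (alpha : R) : Prop :=
  well_linked_for A (out A) alpha.

(* A walk: start vertex v0, then steps (e, v) meaning edge e is traversed
   from the previous vertex to v. *)
Fixpoint walk_ok (v0 : V) (p : seq (E * V)) : bool :=
  match p with
  | [::] => true
  | (e, v) :: p' => ((ends e == (v0, v)) || (ends e == (v, v0))) && walk_ok v p'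
  end.

Definition fpath := (V * seq (E * V))%type.

(* a flow path from edge e to edge e' contained in S: its first edge is e,
   its last edge is e' (both in out(S)), and every intermediate vertex lies
   in S (so all other edges are in G[S]). *)
Definition path_in (S : {set V}) (e e' : E) (P : fpath) : bool :=
  let: (v0, p) := P in
  [&& walk_ok v0 p, (0 < size p)%N,
      (head (e, v0) p).1 == e, (last (e, v0) p).1 == e' &
      all (fun v => v \in S) (take (size p).-1 (map snd p))].

Definition load (f : E) (P : fpath) : nat := count (fun s => s.1 == f) P.2.

(* S is a good router (w.r.t. terminal set T):
   S avoids T, S is 1/3-well-linked, and every pair of distinct edges
   e, e' of out(S) (z = |out(S)|) sends 1/z flow units to each other
   simultaneously, via flows contained in S, with total congestion <= 34.
   F e e' is the path decomposition (weight, path) of the flow between e and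
   e'; unordered pairs are enumerated once as those with
   enum_rank e < enum_rank e'. *)
Definition good_router (R : realType) (T S : {set V}) : Prop :=
  [disjoint S & T] /\
  well_linked S (1 / 3 : R) /\
  exists F : E -> E -> seq (R * fpath),
    (forall e e', e \in out S -> e' \in out S -> (enum_rank e < enum_rank e')%N ->
       (forall wP, wP \in F e e' -> 0 <= wP.1 /\ path_in S e e' wP.2) /\
       \sum_(wP <- F e e') wP.1 = 1 / (#|out S|%:R)) /\
    (forall f : E,
       \sum_(e in out S) \sum_(e' in out S | (enum_rank e < enum_rank e')%N)
          \sum_(wP <- F e e') wP.1 * (load f wP.2)%:R <= 34).

End Graph.

Section Contract.
Variables (V E : finType) (ends : E -> V * V) (Cs : {set {set V}}).

(* the vertex set of G that becomes the image vertex of v in G':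
   the cluster containing v, or {v} if v lies in no cluster *)
Definition cls (v : V) : {set V} :=
  if [pick C in Cs | v \in C] is Some C then C else [set v].

(* vertices of G': super-nodes v_C (represented by C) and the remaining
   vertices v (represented by [set v]) *)
Definition cV : finType := {A : {set V} | [exists v, cls v == A]}.

Definition cproj (v : V) : cV :=
  @exist _ (fun A => [exists v, cls v == A]) (cls v)
    (introT existsP (ex_intro _ v (eqxx (cls v)))).

(* edges of G': the edges of G that do not become self-loops *)
Definition cE : finType := {e : E | cls (ends e).1 != cls (ends e).2}.

Definition cends (e : cE) : cV * cV :=
  (cproj (ends (val e)).1, cproj (ends (val e)).2).

(* Cs is a collection of disjoint good routers containing no terminals
   (so that G' = (cV, cE, cends) is a legal contracted graph for G) *)
Definition legal_collection (R : realType) (T : {set V}) : Prop :=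
  trivIset Cs /\ forall C, C \in Cs -> good_router ends R T C.

End Contract.

Arguments cends {V E} ends Cs e.
Arguments cproj {V} Cs v.

(* Main.v *)
Require Import Defs.
From HB Require Import structures.
From mathcomp Require Import all_boot all_order all_algebra.
From mathcomp Require Import reals.
From mathcomp Require Import lra.
Import Order.TTheory GRing.Theory Num.Theory.
Set Implicit Arguments. Unset Strict Implicit. Unset Printing Implicit Defensive.

Lemma card_bigcup_le (I T : finType) (F : I -> {set T}) :
  (#|\bigcup_i F i| <= \sum_i #|F i|)%N.
Proof.
elim/big_rec2: _ => [|i U n _ H]; first by rewrite cards0.
apply: leq_trans (leq_card_setU _ _) _; exact: leq_add.
Qed.

Lemma sum_disj_le (I T : finType) (F : I -> {set T}) (A : {set T}) :
  (forall i, F i \subset A) ->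
  (forall i j x, x \in F i -> x \in F j -> i = j) ->
  (\sum_i #|F i| <= #|A|)%N.
Proof.
move=> sub dis.
have E1 i : #|F i| = \sum_(x in A) (x \in F i : nat).
  rewrite -big_mkcondr /= sum1_card; apply: eq_card => x /=.
  rewrite [RHS]unfold_in /=.
  apply/idP/andP => [xF|[] //]; split=> //; exact: (subsetP (sub i)).
rewrite (eq_bigr _ (fun i _ => E1 i)) exchange_big /= -sum1_card.
apply: leq_sum => x _.
case: (pickP (fun i => x \in F i)) => [i0 Hi0|none].
  rewrite (bigD1 i0) //= Hi0 big1 // => j Hj.
  case xj: (x \in F j) => //; by rewrite (dis _ _ _ xj Hi0) eqxx in Hj.
by rewrite big1 // => i _; rewrite none.
Qed.

Section Cls.
Variables (V : finType) (Cs : {set {set V}}) (htriv : trivIset Cs).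

Lemma cls_self v : v \in cls Cs v.
Proof.
rewrite /cls; case: pickP => [C /andP[_ ->] //|_]; exact: set11.
Qed.

Lemma cls_eq x v : x \in cls Cs v -> cls Cs x = cls Cs v.
Proof.
rewrite /cls; case: (pickP (fun C => (C \in Cs) && (v \in C))) => [C /andP[CC vC] xC|none].
  case: pickP => [C' /andP[C'C xC']|nx]; last by move: (nx C); rewrite CC xC.
  case: (C' =P C) => // /eqP ne.
  by move/trivIsetP: htriv => /(_ _ _ C'C CC ne)/disjointFr/(_ xC'); rewrite xC.
by move/set1P => ->; case: pickP => // C /andP[CC vC]; move: (none C); rewrite CC vC.
Qed.

Lemma mem_cV x (k : cV Cs) : (x \in val k) = (cproj Cs x == k).
Proof.
apply/idP/eqP => [xA|<-]; last exact: cls_self.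
case: k xA => A HA /= xA; case/existsP: (HA) => v /eqP eA.
apply: val_inj => /=; rewrite -eA in xA *; exact: cls_eq.
Qed.

End Cls.

Section Main.
Variables (R : realType) (V E : finType) (ends : E -> V * V) (T : {set V})
  (Cs : {set {set V}}).
Hypothesis hC : legal_collection ends Cs R T.
Variables (S' : {set cV Cs}) (E' : {set cE ends Cs}).
Hypothesis hE' : E' \subset out (cends ends Cs) S'.
Variables X Y : {set V}.
Hypothesis hXY : X :|: Y = cproj Cs @^-1: S'.
Hypothesis hdis : [disjoint X & Y].

Definition sX (k : cV Cs) := #|out ends (val k) :&: out ends (val k :&: X)|.
Definition sY (k : cV Cs) := #|out ends (val k) :&: out ends (val k :&: Y)|.
Definition X' := [set k in S' | sY k <= sX k].
Definition Y' := [set k in S' | sX k < sY k].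
Definition mis a := (a \in X) != (cproj Cs a \in X').
Definition loopE := [set e | cls Cs (ends e).1 == cls Cs (ends e).2].
Definition B := [set e | (mis (ends e).1 || mis (ends e).2) && (e \notin loopE)].
Definition E'v := [set val e | e in E'].
Definition M (k : cV Cs) := if k \in X' then out ends (val k) :&: out ends (val k :&: Y)
                  else out ends (val k) :&: out ends (val k :&: X).
Definition I (k : cV Cs) := cut ends (val k :&: X) (val k :&: Y).

Lemma inS a : (a \in X :|: Y) = (cproj Cs a \in S').
Proof. by rewrite hXY inE. Qed.

Lemma inY a : a \in X :|: Y -> (a \in Y) = ~~ (a \in X).
Proof.
rewrite inE; case aX: (a \in X) => /=; last by [].
by move=> _; rewrite (disjointFr hdis aX).
Qed.

Lemma inX'S k : k \in X' -> k \in S'.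
Proof. by rewrite inE => /andP[]. Qed.
Lemma inY'S k : k \in Y' -> k \in S'.
Proof. by rewrite inE => /andP[]. Qed.
Lemma inY' k : k \in S' -> (k \in Y') = ~~ (k \in X').
Proof. by rewrite !inE => ->; rewrite /= ltnNge. Qed.

Lemma misS a : mis a -> a \in X :|: Y.
Proof.
rewrite /mis inS; case aS: (cproj Cs a \in S') => //.
have -> : (a \in X) = false by apply/negbTE/negP => aX; move: aS; rewrite -inS inE aX.
by have -> : (cproj Cs a \in X') = false by apply/negbTE/negP => /inX'S; rewrite aS.
Qed.

Lemma misY a : ((a \in Y) != (cproj Cs a \in Y')) = mis a.
Proof.
case aS: (a \in X :|: Y).
  by rewrite inY // inY' -?inS // /mis; case: (a \in X); case: (_ \in X').
have aX : (a \in X) = false by apply/negbTE/negP => aX; move: aS; rewrite inE aX.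
have aY : (a \in Y) = false by apply/negbTE/negP => aY; move: aS; rewrite inE aY orbT.
have aX' : (cproj Cs a \in X') = false by apply/negbTE/negP => /inX'S; rewrite -inS aS.
have aY' : (cproj Cs a \in Y') = false by apply/negbTE/negP => /inY'S; rewrite -inS aS.
by rewrite /mis aX aY aX' aY'.
Qed.


Lemma cE_nl (e : cE ends Cs) : val e \notin loopE.
Proof. by rewrite inE; case: e. Qed.

Lemma step1 (Z : {set V}) (Z' : {set cV Cs})
  (hZ : forall a, ((a \in Z) != (cproj Cs a \in Z')) = mis a) :
  (#|E'v :&: out ends Z| <= #|E' :&: out (cends ends Cs) Z'| + #|B :&: E'v|)%N.
Proof.
apply: leq_trans (subset_leq_card
  (_ : _ \subset [set val e | e in E' :&: out (cends ends Cs) Z'] :|: (B :&: E'v))) _.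
  apply/subsetP => e; rewrite inE => /andP[/imsetP[e0 e0E ->] eo].
  case h: (e0 \in out (cends ends Cs) Z').
    by rewrite inE; apply/orP; left; apply/imsetP; exists e0 => //; rewrite inE e0E h.
  rewrite !inE; apply/orP; right; apply/andP; split; last by apply/imsetP; exists e0.
  rewrite (valP e0) andbT.
  move: eo h; rewrite !inE /cends /=.
  rewrite -!hZ.
  by case: (_ \in Z); case: (_ \in Z); case: (_ \in Z'); case: (_ \in Z').
apply: leq_trans (leq_card_setU _ _) _.
by rewrite card_imset //; apply: val_inj.
Qed.


Lemma step2 :
  (#|cut (cends ends Cs) X' Y'| <= #|cut ends X Y :\: loopE| + #|B :\: E'v|)%N.
Proof.
rewrite -(card_imset _ val_inj).
apply: leq_trans (subset_leq_card
  (_ : _ \subset (cut ends X Y :\: loopE) :|: (B :\: E'v))) (leq_card_setU _ _).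
apply/subsetP => e /imsetP[e0 e0c ->].
have nE : val e0 \notin E'v.
  apply/negP => /imsetP[e1 e1E /val_inj eq]; subst e1.
  move: e0c (subsetP hE' _ e1E); rewrite [_ \in cut _ _ _]inE [_ \in out _ _]inE /cends /=.
  by case/orP => /andP[h1 h2]; rewrite ?(inX'S h1) ?(inY'S h2) ?(inX'S h2) ?(inY'S h1).
have nl := valP e0.
case bad: (mis (ends (val e0)).1 || mis (ends (val e0)).2).
  by rewrite !inE bad nE nl orbT.
move/negbT: bad; rewrite negb_or /mis => /andP[/negPn/eqP h1 /negPn/eqP h2].
rewrite !inE nl /=; apply/orP; left.
move: e0c; rewrite inE /cends /= -!h1 -!h2.
have hy a : cproj Cs a \in Y' -> (a \in X) = (cproj Cs a \in X') -> a \in Y.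
  move=> aY' hx; have aS : a \in X :|: Y by rewrite inS; exact: inY'S.
  by rewrite inY // hx -inY' // -inS.
case/orP => /andP[aX bY]; apply/orP; [left|right].
  by rewrite aX /=; apply: hy; rewrite ?h2.
by rewrite bY andbT; apply: hy; rewrite ?h1.
Qed.


Lemma out0 : out ends set0 = set0.
Proof. by apply/setP => e; rewrite !inE. Qed.

Lemma ntriv : trivIset Cs.
Proof. by case: hC. Qed.

Lemma kS (k : cV Cs) x : k \in S' -> x \in val k -> x \in X :|: Y.
Proof. by move=> kS; rewrite (mem_cV ntriv) inS => /eqP ->. Qed.

Lemma Mmem e a b : (ends e = (a, b)) \/ (ends e = (b, a)) ->
  cls Cs a != cls Cs b -> mis a -> e \in M (cproj Cs a).
Proof.
move=> he nab ma.
have bn : (b \in cls Cs a) = false.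
  by apply/negbTE/negP => /(cls_eq ntriv) eb; rewrite eb eqxx in nab.
have aa := cls_self Cs a.
have aS := misS ma.
move: ma; rewrite /mis /M /= => ma.
case: ifP => hX'; rewrite !inE;
  (case: he => ->; rewrite /= aa bn /=);
  move: ma; rewrite hX' ?inY //; by case: (a \in X).
Qed.

Lemma B_sub : B \subset \bigcup_k M k.
Proof.
apply/subsetP => e; rewrite inE => /andP[/orP[m|m] nl]; apply/bigcupP;
  rewrite inE in nl.
- exists (cproj Cs (ends e).1) => //.
  apply: (Mmem (b := (ends e).2) _ _ m); [left; by case: (ends e)|exact: nl].
- exists (cproj Cs (ends e).2) => //.
  apply: (Mmem (b := (ends e).1) _ _ m); [right; by case: (ends e)|by rewrite eq_sym].
Qed.


Lemma set1I0 (v : V) (Z : {set V}) : v \notin Z -> [set v] :&: Z = set0.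
Proof. by move=> vZ; apply/setP => x; rewrite !inE; case: eqP => // ->; rewrite (negbTE vZ). Qed.

Lemma min_le (k : cV Cs) : k \in S' -> (minn (sX k) (sY k) <= 3 * #|I k|)%N.
Proof.
move=> kS'; have ksub x : x \in val k -> x \in X :|: Y by exact: kS.
rewrite /sX /sY /I; move: ksub.
case: k kS' => A HA /= _; case/existsP: HA => v /eqP.
rewrite /cls; case: pickP => [C /andP[CC vC]|_] <- sub.
  have [_ [wl _]] := hC.2 C CC.
  have h := wl (C :&: X) (C :&: Y).
  have e1 : C :&: X :|: C :&: Y = C.
    by rewrite -setIUr; apply/setIidPl/subsetP => x; exact: sub.
  have e2 : [disjoint C :&: X & C :&: Y].
    by apply: disjointWl (subsetIr _ _) _; apply: disjointWr (subsetIr _ _) _.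
  move: (h e1 e2).
  set a := #|_ :&: out ends (C :&: X)|; set b := #|_ :&: out ends (C :&: Y)|.
  set c := #|cut _ _ _|.
  rewrite -(ler_nat R) natrM.
  case: (leqP a b) => hab.
    rewrite !min_l ?ler_nat // => hh; lra.
  have hab' := ltnW hab. rewrite [Num.min _ _]min_r ?ler_nat // => hh; lra.
case vX: (v \in X).
  have vY : v \notin Y by rewrite (disjointFr hdis vX).
  by rewrite (set1I0 vY) out0 setI0 cards0 minn0.
by rewrite (set1I0 (negbT vX)) out0 setI0 cards0 min0n.
Qed.

Lemma M_le (k : cV Cs) : (#|M k| <= 3 * #|I k|)%N.
Proof.
case kS': (k \in S'); last first.
  have e : val k :&: X = set0.
    apply/setP => x; rewrite !inE; apply/negbTE/negP => /andP[xk xX].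
    by move: kS'; rewrite -(eqP (_ : cproj Cs x == k)) -?inS ?inE ?xX // -(mem_cV ntriv).
  have kX' : (k \in X') = false by apply/negbTE/negP => /inX'S; rewrite kS'.
  by rewrite /M kX' e out0 setI0 cards0.
apply: leq_trans (min_le kS'); rewrite leq_min /M.
case: ifP => hX'; rewrite -/(sX k) -/(sY k) ?leqnn ?andbT //.
  by move: hX'; rewrite inE => /andP[].
have : k \in Y' by rewrite inY' // hX'.
by rewrite inE => /andP[_ /ltnW].
Qed.


Lemma I_mem (k : cV Cs) e : e \in I k ->
  [/\ (ends e).1 \in val k, (ends e).2 \in val k & e \in cut ends X Y].
Proof.
rewrite /I !inE.
by case/orP => /andP[/andP[-> ->] /andP[-> ->]]; rewrite ?orbT.
Qed.

Lemma step3 : (#|B| <= 3 * #|cut ends X Y :&: loopE|)%N.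
Proof.
apply: leq_trans (subset_leq_card B_sub) _.
apply: leq_trans (card_bigcup_le M) _.
apply: leq_trans (_ : _ <= \sum_k 3 * #|I k|)%N _.
  by apply: leq_sum => k _; exact: M_le.
rewrite -big_distrr /= leq_mul2l /=.
apply: sum_disj_le => [k|i j e].
  apply/subsetP => e eI; have [e1 e2 ec] := I_mem eI; rewrite !inE in ec *; rewrite ec /=.
  rewrite (mem_cV ntriv) in e1; rewrite (mem_cV ntriv) in e2.
  by rewrite -[cls Cs _]/(val (cproj Cs _)) (eqP e1) -(eqP e2).
move=> ei ej; have [e1 _ _] := I_mem ei; have [e2 _ _] := I_mem ej.
by move: e1 e2; rewrite !(mem_cV ntriv) => /eqP <- /eqP <-.
Qed.


Local Open Scope ring_scope.
Lemma final (alpha : R) (halpha : alpha < 1)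
  (hwl : well_linked_for (cends ends Cs) S' E' alpha) :
  alpha / 3 * Num.min (#|E'v :&: out ends X|%:R) (#|E'v :&: out ends Y|%:R)
    <= (#|cut ends X Y|%:R : R).
Proof.
have hU : X' :|: Y' = S'.
  apply/setP => k; rewrite !inE; case: (k \in S') => //=; by case: ltnP.
have hD : [disjoint X' & Y'].
  rewrite -setI_eq0; apply/eqP/setP => k; rewrite !inE.
  by case: (k \in S'); case: ltnP.
have h := hwl _ _ hU hD.
have s1 := @step1 X X' (fun a => erefl).
have s1' := @step1 Y Y' misY.
have s2 := step2; have s3 := step3.
have c1 := cardsID loopE (cut ends X Y).
have c2 := cardsID E'v B.
move: h s1 s1' s2 s3 c1 c2.
set tX := #|E'v :&: out ends X|; set tY := #|E'v :&: out ends Y|.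
set tX' := #|E' :&: _ X'|; set tY' := #|E' :&: _ Y'|.
set c' := #|cut _ X' Y'|; set o := #|cut ends X Y :\: loopE|.
set i := #|cut ends X Y :&: loopE|; set c := #|cut ends X Y|.
set D := #|B :&: E'v|; set Bc := #|B :\: E'v|; set b := #|B|.
move=> h s1 s1' s2 s3 c1 c2.
move: s1 s1' s2 s3; rewrite -!(ler_nat R) !natrD => s1 s1' s2 s3.
move/(congr1 (fun n => n%:R : R)): c1; rewrite natrD => c1.
move/(congr1 (fun n => n%:R : R)): c2; rewrite natrD => c2.
have p3 : (0 : R) <= D%:R by [].
set m := Num.min _ _; set m' := Num.min _ _ in h.
have hm : m <= m' + D%:R.
  rewrite /m /m'; case: (leP tX'%:R tY'%:R) => h1; case: (leP tX%:R tY%:R) => h2; lra.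
have m0 : 0 <= m by rewrite /m; case: (leP tX%:R tY%:R).
have e : alpha / 3 * m = alpha * m / 3 by rewrite mulrAC.
rewrite e.
case: (leP alpha 0) => a0.
  have : alpha * m <= 0 by rewrite mulr_le0_ge0.
  have : (0 : R) <= c%:R by [].
  lra.
have q1 : alpha * m <= alpha * m' + alpha * D%:R.
  by rewrite -mulrDr ler_wpM2l // ltW.
have q2 : alpha * D%:R <= D%:R.
  by rewrite ler_piMl // ltW.
have : (0 : R) <= o%:R by [].
lra.
Qed.

End Main.

Local Open Scope ring_scope.

Theorem claim3 (R : realType) (V E : finType) (ends : E -> V * V)
    (T : {set V}) (Cs : {set {set V}})
    (hC : legal_collection ends Cs R T)
    (S' : {set cV Cs}) (E' : {set cE ends Cs}) (alpha : R)
    (halpha : alpha < 1)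
    (hS'T : [disjoint S' & cproj Cs @: T])
    (hE' : E' \subset out (cends ends Cs) S')
    (hwl : well_linked_for (cends ends Cs) S' E' alpha) :
  well_linked_for ends (cproj Cs @^-1: S') (val @: E') (alpha / 3).
Proof.
move=> X Y hXY hdis.
exact: (final hC hE' hXY hdis halpha hwl).
Qed.
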